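(* For all $x,y\in\mathcal A$, the power series $\mathcal S(x,y;\lambda)=\sum_{n\ge0}P_x(W_n=y)\lambda^n$ and $\mathcal R(x,y;\lambda)=\sum_{n\ge0}P_x(\tau_y=n)\lambda^n$ have radii of convergence strictly greater than $1$.
   Context: Fix an integer $N\ge 3$. Let $\mathcal G_N$ be the groupoid with object set $\{1,\dots,N\}$ generated by arrows $A_{i,j}^{(k)}$, $i\neq j\in\{1,\dots,N\}$, $k\in\{-1,1\}$, with source $i$ and target $j$, subject to the relations $A_{i,j}^{(k)}A_{j,\ell}^{(k)}=A_{i,\ell}^{(k)}$ for all $i,j,\ell$, $k$, with the convention $A_{i,i}^{(k)}:=e_i$ (unit at object $i$). Let $\mathcal A$ be its arrow set. Let $\{W_n\}_{n\ge0}$ be the Markov chain on $\mathcal A$ with $P(W_{n+1}=y\mid W_n=x)=p_{i,j}^{(k)}$ if $x^{-1}y=A_{i,j}^{(k)}$ with $i\ne j$ and $0$ otherwise, where $p_{i,j}^{(k)}\in(0,1)$ and $\sum_{j\ne i}\sum_{k=\pm1}p_{i,j}^{(k)}=1$ for each $i$; $P_x$ denotes the law with $W_0=x$. For $y\in\mathcal A$, $\tau_y=\inf\{n\ge0: W_n=y\}$ is the first hitting time of $y$ (possibly $\infty$). (A power series that is identically zero is regarded as having infinite radius of convergence.) *)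

(* Defs.v *)
From Stdlib Require Import Reals.
From mathcomp Require Import all_boot all_order all_algebra.
From mathcomp Require Import Rstruct.
From Coquelicot Require Rbar PSeries.

Set Implicit Arguments.
Unset Strict Implicit.
Unset Printing Implicit Defensive.

Local Open Scope ring_scope.

(** Signs k in {-1, +1} are encoded by booleans: [true] = +1, [false] = -1.

   A generator letter A_{i,j}^{(k)} appearing in a word is recorded by its
   target j and its sign k; its source is the target of the previous letter
   (or the source object of the word).  Since the relations
   A_{ij}^{(k)} A_{jl}^{(k)} = A_{il}^{(k)} (with A_{ii}^{(k)} = e_i) say that
   for each fixed k the arrows of sign k form the pair groupoid on
   {1,..,N}, every arrow of G_N has a unique reduced expression
   A_{i0 i1}^{(k1)} A_{i1 i2}^{(k2)} ... A_{i(m-1) im}^{(km)}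
   with consecutive objects distinct and consecutive signs different
   (m = 0 gives the unit e_{i0}).  An arrow is represented by the pair
   (i0, [:: (i1,k1); ...; (im,km)]). *)

Definition raw_arrow (N : nat) : Type := ('I_N * seq ('I_N * bool))%type.

Definition reduced N (a : raw_arrow N) : bool :=
  path (fun u v : 'I_N => u != v) a.1 (map fst a.2) &&
  sorted (fun u v : bool => u != v) (map snd a.2).

Definition is_arrow N (a : raw_arrow N) : Prop := reduced a.

Definition source N (a : raw_arrow N) : 'I_N := a.1.
Definition target N (a : raw_arrow N) : 'I_N := last a.1 (map fst a.2).

(** right multiplication x * A_{t(x), j}^{(k)} of a reduced arrow x by a
    generator whose source is the target of x (j <> t(x)), returning the
    reduced form, using A_{i'i}^{(k)} A_{ij}^{(k)} = A_{i'j}^{(k)}. *)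
Definition mulgen N (x : raw_arrow N) (j : 'I_N) (k : bool) : raw_arrow N :=
  match rev x.2 with
  | [::] => (x.1, [:: (j, k)])
  | (i, k') :: rw =>
      if k' != k then (x.1, rcons x.2 (j, k))
      else let w' := rev rw in
           let i' := last x.1 (map fst w') in
           if i' == j then (x.1, w') else (x.1, rcons w' (j, k))
  end.

(** A step from x is a choice c = (j,k); it moves
   to x * A_{t(x),j}^{(k)} with probability p_{t(x),j}^{(k)} if j <> t(x)
   (and has probability 0 otherwise, since then A_{t(x),j}^{(k)} is not a
   generator). *)
Definition step_prob N (p : 'I_N -> 'I_N -> bool -> R)
  (x : raw_arrow N) (c : 'I_N * bool) : R :=
  if c.1 != target x then p (target x) c.1 c.2 else 0.

Definition step N (x : raw_arrow N) (c : 'I_N * bool) : raw_arrow N :=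
  mulgen x c.1 c.2.

(** probability (under P_x) of the cylinder of the trajectory driven by the
    choices cs *)
Fixpoint path_prob N (p : 'I_N -> 'I_N -> bool -> R) (x : raw_arrow N)
  (cs : seq ('I_N * bool)) : R :=
  match cs with
  | [::] => 1
  | c :: cs' => step_prob p x c * path_prob p (step x c) cs'
  end.

Fixpoint endpoint N (x : raw_arrow N) (cs : seq ('I_N * bool)) : raw_arrow N :=
  match cs with
  | [::] => x
  | c :: cs' => endpoint (step x c) cs'
  end.

Fixpoint first_hit_at_end N (x y : raw_arrow N) (cs : seq ('I_N * bool)) : bool :=
  match cs with
  | [::] => x == y
  | c :: cs' => (x != y) && first_hit_at_end (step x c) y cs'
  end.

Definition prob_W N (p : 'I_N -> 'I_N -> bool -> R) (x y : raw_arrow N)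
  (n : nat) : R :=
  \sum_(cs : n.-tuple ('I_N * bool))
     path_prob p x cs * (endpoint x cs == y)%:R.

Definition prob_tau N (p : 'I_N -> 'I_N -> bool -> R) (x y : raw_arrow N)
  (n : nat) : R :=
  \sum_(cs : n.-tuple ('I_N * bool))
     path_prob p x cs * (first_hit_at_end x y cs)%:R.

Definition S_coef N p (x y : raw_arrow N) : nat -> R := fun n => prob_W p x y n.
Definition R_coef N p (x y : raw_arrow N) : nat -> R := fun n => prob_tau p x y n.

(* Main.v *)
Require Import Defs.
From Stdlib Require Import Reals.
From mathcomp Require Import all_boot all_order all_algebra.
From mathcomp Require Import Rstruct.
From Coquelicot Require Rbar PSeries.
From Stdlib Require Import Lra Lia.
From Coquelicot Require Series Hierarchy Lub.


Section Rad.
Local Open Scope R_scope.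
Lemma radius_gt1 (a : nat -> R) (C rho : R) : 0 < rho -> rho < 1 ->
  (forall n, 0 <= a n /\ a n <= C * pow rho n) ->
  Rbar.Rbar_lt (Rbar.Finite 1) (PSeries.CV_radius a).
Proof.
move=> r0 r1 ha.
set r := (1 + / rho) / 2.
have hir : 1 < / rho.
  rewrite -Rinv_1; apply: Rinv_lt_contravar; lra.
have hr1 : 1 < r by rewrite /r; lra.
have hrr : rho * r < 1.
  rewrite /r; have -> : rho * ((1 + / rho) / 2) = (rho + 1) / 2.
    by field; lra.
  lra.
have disk : PSeries.CV_disk a r.
  rewrite /PSeries.CV_disk.
  eapply (@Series.ex_series_le Hierarchy.R_AbsRing Hierarchy.R_CompleteNormedModule _ (fun n => C * pow (rho * r) n)).
    move=> n; rewrite /Hierarchy.norm /= /Hierarchy.abs /=.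
    have [h0 h1] := ha n.
    have rn : 0 <= pow r n by apply: pow_le; lra.
    rewrite Rabs_Rabsolu Rabs_pos_eq; last by apply: Rmult_le_pos.
    rewrite Rpow_mult_distr -Rmult_assoc.
    by apply: Rmult_le_compat_r.
  have g : @Series.ex_series Hierarchy.R_AbsRing Hierarchy.R_NormedModule (fun n => pow (rho * r) n).
    apply: Series.ex_series_geom.
    rewrite Rabs_pos_eq; first lra.
    apply: Rmult_le_pos; lra.
  have g2 := @Series.ex_series_scal_l Hierarchy.R_AbsRing Hierarchy.R_NormedModule C _ g.
  exact: g2.
have := (Lub.Lub_Rbar_correct (PSeries.CV_disk a)).1 r disk.
rewrite -/(PSeries.CV_radius a) => hle.
apply: Rbar.Rbar_lt_le_trans hle.
by rewrite /=.
Qed.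
End Rad.

From mathcomp Require Import ring lra.
Set Implicit Arguments. Unset Strict Implicit. Unset Printing Implicit Defensive.
Import Order.TTheory GRing.Theory Num.Theory.
Local Open Scope ring_scope.

Lemma fin_argmax (T : finType) (t0 : T) (F : T -> R) : exists t, forall s, F s <= F t.
Proof.
case: (@Order.TotalTheory.arg_maxP _ _ T t0 xpredT F erefl) => i _ H.
by exists i => s; apply: H.
Qed.

Section LA.
Variable N : nat.
Variable q : 'I_N -> 'I_N -> R.
Hypothesis qpos : forall i j, i != j -> 0 < q i j.
Hypothesis N3 : (3 <= N)%N.

Definition alph t := \sum_(j | j != t) q t j.

Lemma maxprin (r : 'I_N) (v : 'I_N -> R) : v r = 0 ->
  (forall t, t != r -> \sum_(j | j != t) q t j * (v j - v t) = 0) ->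
  forall t, v t <= 0.
Proof.
move=> vr0 hv.
have [t0 Ht0] := fin_argmax r v.
suff : v t0 <= 0 by move=> h t; apply: le_trans (Ht0 t) h.
rewrite leNgt; apply/negP => pos.
have tr : t0 != r by apply/eqP => e; move: pos; rewrite e vr0 ltxx.
have := hv t0 tr.
rewrite (bigD1 r) /=; last by rewrite eq_sym.
move=> h.
have h1 : \sum_(j | (j != t0) && (j != r)) q t0 j * (v j - v t0) <= 0.
  apply: le_trans (_ : _ <= \sum_(j | (j != t0) && (j != r)) (0:R)) _; last by rewrite big1_eq.
  apply: ler_sum => j /andP [jt _]; rewrite mulr_ge0_le0 //.
    by apply: ltW; apply: qpos; rewrite eq_sym.
  by rewrite subr_le0.
have h2 : q t0 r * (v r - v t0) < 0.
  rewrite vr0 sub0r mulrN oppr_lt0; apply: mulr_gt0 => //; exact: qpos.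
lra.
Qed.


Definition Pmat (r : 'I_N) : 'M[R]_N := \matrix_(j, t) (if t == r then (j == r)%:R
                                   else if j == t then - alph t else q t j).
Definition psol (r : 'I_N) (g : 'I_N -> R) (t : 'I_N) : R :=
  ((\row_t (if t == r then 0 else g t)) *m invmx (Pmat r)) 0 t.

Lemma poisson (r : 'I_N) (g : 'I_N -> R) :
  psol r g r = 0 /\ forall t, t != r -> \sum_(j | j != t) q t j * (psol r g j - psol r g t) = g t.
Proof.
pose M := Pmat r.
have key : forall (w : 'rV[R]_N) t, t != r ->
    (w *m M) 0 t = \sum_(j | j != t) q t j * (w 0 j - w 0 t).
  move=> w t tr; rewrite !mxE (bigD1 t) //= mxE eqxx (negbTE tr).
  rewrite /alph mulrN mulr_sumr -sumrN -big_split /=.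
  apply: eq_bigr => j jt; rewrite mxE (negbTE tr) (negbTE jt) mulrBr; idtac.
  ring.
have keyr : forall (w : 'rV[R]_N), (w *m M) 0 r = w 0 r.
  move=> w; rewrite !mxE (bigD1 r) //= mxE !eqxx mulr1 big1 ?addr0 //.
  by move=> j jr; rewrite mxE eqxx (negbTE jr) mulr0.
have Munit : M \in unitmx.
  rewrite unitmxE unitfE; apply/negP => /det0P [v vn0 vM].
  have h0 : forall t, v 0 t <= 0.
    apply: (@maxprin r (fun t => v 0 t)).
      by have := keyr v; rewrite vM mxE => <-.
    by move=> t tr; rewrite -key // vM mxE.
  have h1 : forall t, - v 0 t <= 0.
    apply: (@maxprin r (fun t => - v 0 t)).
      by have := keyr v; rewrite vM mxE => <-; rewrite oppr0.
    move=> t tr; have := key v t tr; rewrite vM mxE => /esym h.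
    rewrite (eq_bigr (fun j => - (q t j * (v 0 j - v 0 t)))); last by move=> j _; ring.
    by rewrite sumrN h oppr0.
  move/negP: vn0; apply; apply/eqP/rowP => t; rewrite mxE.
  by apply/le_anti; rewrite h0 /= -oppr_le0 h1.
pose b : 'rV[R]_N := \row_t (if t == r then 0 else g t).
pose w := b *m invmx M.
have wM : w *m M = b by rewrite /w mulmxKV.
have -> : psol r g = (fun t => w 0 t) by [].
split.
  by rewrite -keyr wM mxE eqxx.
by move=> t tr; rewrite -key // wM mxE (negbTE tr).
Qed.

Lemma three_distinct (a b : 'I_N) : exists j, (j != a) && (j != b).
Proof.
have h0 : (0 < N)%N by apply: leq_trans N3.
have h1 : (1 < N)%N by apply: leq_trans N3.
have h2 : (2 < N)%N by [].
pose j0 := Ordinal h0; pose j1 := Ordinal h1; pose j2 := Ordinal h2.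
case: (boolP ((j0 != a) && (j0 != b))) => [H|H0]; first by exists j0.
case: (boolP ((j1 != a) && (j1 != b))) => [H|H1]; first by exists j1.
case: (boolP ((j2 != a) && (j2 != b))) => [H|H2]; first by exists j2.
exfalso; move: H0 H1 H2; rewrite !negb_and !negbK.
case/orP => /eqP/(congr1 val) /= e0; case/orP => /eqP/(congr1 val) /= e1;
  case/orP => /eqP/(congr1 val) /= e2; lia.
Qed.

Lemma sum_exch (F : 'I_N -> 'I_N -> R) :
  \sum_j \sum_(t | t != j) F t j = \sum_t \sum_(j | j != t) F t j.
Proof.
rewrite (eq_bigr (fun j => \sum_t (if t != j then F t j else 0))); last first.
  by move=> j _; rewrite big_mkcond.
rewrite exchange_big /=; apply: eq_bigr => t _; rewrite [RHS]big_mkcond.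
by apply: eq_bigr => j _; rewrite eq_sym.
Qed.

Lemma alph_pos t : 0 < alph t.
Proof.
have [j /andP [jt _]] := three_distinct t t.
rewrite /alph (bigD1 j) //=; apply: ltr_wpDr; last by apply: qpos; rewrite eq_sym.
by apply: sumr_ge0 => i /andP [it _]; apply: ltW; apply: qpos; rewrite eq_sym.
Qed.

Lemma inv_measure : exists m : 'I_N -> R, (forall t, 0 < m t) /\
  forall j, \sum_(t | t != j) m t * q t j = m j * alph j.
Proof.
pose L : 'M[R]_N := \matrix_(t, j) (if t == j then - alph t else q t j).
have Lrow : forall (v : 'rV[R]_N) j,
    (v *m L) 0 j = \sum_(t | t != j) v 0 t * q t j - v 0 j * alph j.
  move=> v j; rewrite !mxE (bigD1 j) //= mxE eqxx mulrN addrC; congr (_ - _).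
  by apply: eq_bigr => t tj; rewrite mxE (negbTE tj).
have detL : \det L == 0.
  rewrite -det_tr; apply/det0P; exists (const_mx 1).
    apply/negP => /eqP /rowP /(_ (Ordinal (leq_trans (isT : (0 < 3)%N) N3))).
    by rewrite !mxE => /eqP; rewrite oner_eq0.
  apply/rowP => j; rewrite !mxE (bigD1 j) //= !mxE eqxx mul1r.
  rewrite (eq_bigr (fun t => q j t)); last first.
    by move=> t tj; rewrite !mxE mul1r eq_sym (negbTE tj).
  by rewrite /alph addrC subrr.
case/det0P: detL => v vn0 vL.
have eqv : forall j, \sum_(t | t != j) v 0 t * q t j = v 0 j * alph j.
  by move=> j; apply/eqP; rewrite -subr_eq0 -Lrow vL mxE.
have tri : forall j, \sum_(t | t != j) `|v 0 t| * q t j - `|v 0 j| * alph j >= 0.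
  move=> j; rewrite subr_ge0.
  have -> : `|v 0 j| * alph j = `|v 0 j * alph j|.
    by rewrite normrM (ger0_norm (ltW (alph_pos j))).
  rewrite -eqv; apply: le_trans (ler_norm_sum _ _ _) _.
  apply: ler_sum => t tj; rewrite normrM (ger0_norm (ltW (qpos _))) //.
have tot : \sum_j (\sum_(t | t != j) `|v 0 t| * q t j - `|v 0 j| * alph j) = 0.
  rewrite sumrB sum_exch; apply/eqP; rewrite subr_eq0; apply/eqP.
  by apply: eq_bigr => t _; rewrite /alph mulr_sumr.
have eqj : forall j, `|\sum_(t | t != j) v 0 t * q t j| =
                     \sum_(t | t != j) `|v 0 t * q t j|.
  move=> j; have := psumr_eq0P (fun j _ => tri j) tot (i:=j) isT.
  move=> /eqP; rewrite subr_eq0 => /eqP h.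
  rewrite eqv normrM (ger0_norm (ltW (alph_pos j))) -h.
  by apply: eq_bigr => t tj; rewrite normrM (ger0_norm (ltW (qpos _))) // eq_sym.
have samesign : forall j a b, a != j -> b != j -> 0 < v 0 a -> v 0 b < 0 -> False.
  move=> j a b aj bj pa nb; have := eqj j.
  set S := \sum_(t | t != j) _.
  case: (lerP 0 S) => hS.
    rewrite ger0_norm // => /esym /eqP; rewrite -subr_eq0 -sumrB => /eqP h0.
    have pos : forall i, i != j -> 0 <= `|v 0 i * q i j| - v 0 i * q i j.
      by move=> t _; rewrite subr_ge0 ler_norm.
    have := psumr_eq0P pos h0 bj.
    rewrite ltr0_norm; last by rewrite pmulr_llt0 // qpos.
    move=> /= h1; have: v 0 b * q b j = 0 by lra.
    by move/eqP; rewrite mulf_eq0 (lt_eqF nb) (gt_eqF (qpos bj)).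
  rewrite ltr0_norm // => /esym /eqP; rewrite -subr_eq0 opprK -big_split /= => /eqP h0.
  have pos : forall i, i != j -> 0 <= `|v 0 i * q i j| + v 0 i * q i j.
    by move=> t _; rewrite -lerBlDr sub0r -normrN ler_norm.
  have := psumr_eq0P pos h0 aj.
  rewrite gtr0_norm; last by rewrite pmulr_lgt0 // qpos.
  move=> /= h1; have: v 0 a * q a j = 0 by lra.
  by move/eqP; rewrite mulf_eq0 (gt_eqF pa) (gt_eqF (qpos aj)).
have global : forall a b, 0 < v 0 a -> v 0 b < 0 -> False.
  move=> a b pa nb; have [j /andP [ja jb]] := three_distinct a b.
  by apply: (samesign j a b); rewrite // eq_sym.
have [w [wge wex weq]] : exists w : 'I_N -> R, [/\ forall t, 0 <= w t,
     exists a, 0 < w a & forall j, \sum_(t | t != j) w t * q t j = w j * alph j].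
  case: (boolP [exists t, 0 < v 0 t]) => [/existsP [a pa] | /existsPn H].
    exists (fun t => v 0 t); split => //; last by exists a.
    by move=> t; rewrite leNgt; apply/negP => nt; apply: (global a t).
  exists (fun t => - v 0 t); split.
  - by move=> t; rewrite oppr_ge0 leNgt H.
  - have : exists t, v 0 t != 0.
      apply/existsP; apply: contraNT vn0 => /existsPn h; apply/eqP/rowP => t.
      by rewrite mxE; apply/eqP; move: (h t); rewrite negbK.
    case=> a va; exists a; rewrite oppr_gt0 lt_neqAle va /= leNgt H //.
  - by move=> j; rewrite mulNr -eqv -sumrN; apply: eq_bigr => t _; rewrite mulNr.
exists w; split => // j.
case: wex => a pa.
case: (eqVneq j a) => [-> //|ja].
have : 0 < w j * alph j.
  rewrite -weq (bigD1 a) /=; last by rewrite eq_sym.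
  apply: ltr_pwDl; first by rewrite mulr_gt0 // qpos // eq_sym.
  by apply: sumr_ge0 => t /andP [tj _]; rewrite mulr_ge0 // ltW // qpos.
by rewrite pmulr_lgt0 // alph_pos.
Qed.

End LA.

Lemma sum_tuple_cons (T : finType) (n : nat) (F : seq T -> R) :
  \sum_(cs : n.+1.-tuple T) F cs = \sum_(c : T) \sum_(cs : n.-tuple T) F (c :: cs).
Proof.
rewrite pair_bigA /=.
rewrite (reindex (fun pc : T * n.-tuple T => [tuple of pc.1 :: pc.2])) /=; last first.
  exists (fun t : n.+1.-tuple T => (thead t, [tuple of behead t])).
    by move=> [c cs] _ /=; congr pair; apply: val_inj.
  move=> t _; apply: val_inj => /=; case: t => [[|a s] //= _].
by apply: eq_bigr => -[c cs].
Qed.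

Lemma fin_lower (T : finType) (F : T -> R) : (forall x, 0 < F x) ->
  exists d, 0 < d /\ forall x, d <= F x.
Proof.
move=> Fp; case: (pickP (fun _ : T => true)) => [x0 _ | h].
  case: (@Order.TotalTheory.arg_minP _ _ T x0 xpredT F erefl) => i _ H.
  by exists (F i); split => // x; apply: H.
by exists 1; split => // x; move: (h x).
Qed.

Lemma sum_ge2 (N : nat) (F : 'I_N -> R) (r a b : 'I_N) :
  (forall t, 0 <= F t) -> a != r -> b != r -> a != b ->
  F a + F b <= \sum_(t | t != r) F t.
Proof.
move=> F0 ar br ab; rewrite (bigD1 a) //= (bigD1 b) /=; last by rewrite br eq_sym ab.
rewrite addrA lerDl; apply: sumr_ge0 => t _; exact: F0.
Qed.

Section Drift.
Variable N : nat.
Variable p : 'I_N -> 'I_N -> bool -> R.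
Hypothesis ppos : forall i j k, i != j -> 0 < p i j k.
Hypothesis N3 : (3 <= N)%N.

Definition q s := fun i j => p i j s.
Definition al s t := alph (q s) t.

Lemma drift : exists (u : bool -> 'I_N -> 'I_N -> R) (d : R), 0 < d /\
  (forall s r, u s r r = 0) /\
  (forall s r t, t != r -> d <= \sum_(j | j != t) p t j (~~ s) * u (~~ s) t j
                               + \sum_(j | j != t) p t j s * (u s r j - u s r t)) /\
  (forall i, d <= \sum_(j | j != i) p i j true * u true i j
                + \sum_(j | j != i) p i j false * u false i j).
Proof.
have qpos : forall s i j, i != j -> 0 < q s i j by move=> s i j ij; exact: ppos.
have [m1 [m1p m1e]] := inv_measure (qpos true) N3.
have [m2 [m2p m2e]] := inv_measure (qpos false) N3.
pose m s := if s then m1 else m2.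
have mp : forall s t, 0 < m s t by case.
have me : forall s j, \sum_(t | t != j) m s t * q s t j = m s j * al s j by case.
pose E s r := if s then 1 / m1 r
              else (1 / (2 * m2 r)) * \sum_(t | t != r) m2 t / m1 t.
have Ep : forall s r, 0 < E s r.
  case=> r; rewrite /E; first by rewrite divr_gt0.
  apply: mulr_gt0; first by rewrite divr_gt0 // mulr_gt0.
  have [t /andP [tr _]] := three_distinct N3 r r.
  rewrite (bigD1 t) //=; apply: ltr_pwDl; first by rewrite divr_gt0.
  by apply: sumr_ge0 => i _; rewrite divr_ge0 // ltW.
have Eineq : forall s r, m s r * E s r < \sum_(t | t != r) m s t * E (~~ s) t.
  case=> r /=; last first.
    rewrite /E /= mulrA mulrC mulrA.
    have -> : (\sum_(t | t != r) m2 t / m1 t) = \sum_(t | t != r) m2 t * (1 / m1 t).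
      by apply: eq_bigr => t _; rewrite mul1r.
    set S := \sum_(t | t != r) _.
    have Spos : 0 < S.
      have [t /andP [tr _]] := three_distinct N3 r r.
      rewrite /S (bigD1 t) //=; apply: ltr_pwDl; first by rewrite mulr_gt0 // divr_gt0.
      by apply: sumr_ge0 => i _; rewrite mulr_ge0 // ltW // divr_gt0.
    have -> : S * m2 r * (1 / (2 * m2 r)) = S / 2.
      by field; rewrite lt0r_neq0.
    lra.
  have -> : m1 r * E true r = 1 by rewrite /E mul1r mulfV // lt0r_neq0.
  have [a /andP [ar _]] := three_distinct N3 r r.
  have [b /andP [br ba]] := three_distinct N3 r a.
  have F0 : forall t, 0 <= m1 t * E false t by move=> t; rewrite mulr_ge0 // ltW.
  apply: lt_le_trans (sum_ge2 F0 ar br _); last by rewrite eq_sym.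
  have Fa : m1 a / (2 * m2 a) * (m2 b / m1 b + m2 r / m1 r) <= m1 a * E false a.
    rewrite /E /= mulrA mul1r; apply: ler_wpM2l; first by rewrite divr_ge0 // ltW // mulr_gt0.
    apply: (sum_ge2 (r:=a)) => //; first by move=> t; rewrite divr_ge0 // ltW.
    by rewrite eq_sym.
  have Fb : m1 b / (2 * m2 b) * (m2 a / m1 a) <= m1 b * E false b.
    rewrite /E /= [X in _ <= X]mulrA mul1r; apply: ler_wpM2l; first by rewrite divr_ge0 // ltW // mulr_gt0.
    rewrite (bigD1 a) /=; last by rewrite eq_sym.
    by rewrite lerDl; apply: sumr_ge0 => t _; rewrite divr_ge0 // ltW.
  apply: lt_le_trans (lerD Fa Fb).
  have h1 := m1p a; have h2 := m2p a; have h3 := m1p b; have h4 := m2p b.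
  have h5 := m1p r; have h6 := m2p r.
  pose x := m1 a * m2 b / (m2 a * m1 b).
  have xp : 0 < x by rewrite divr_gt0 // mulr_gt0.
  have e1 : m1 a / (2 * m2 a) * (m2 b / m1 b + m2 r / m1 r)
          = x / 2 + m1 a * m2 r / (2 * m2 a * m1 r).
    rewrite /x; field.
    by rewrite !lt0r_neq0 //= ?mulr_gt0.
  have e2 : m1 b / (2 * m2 b) * (m2 a / m1 a) = x^-1 / 2.
    rewrite /x; field.
    by rewrite !lt0r_neq0 //= ?mulr_gt0.
  have ex : x / 2 + x^-1 / 2 - 1 = (x - 1) ^+ 2 / (2 * x).
    by field; rewrite lt0r_neq0.
  have sq : 0 <= (x - 1) ^+ 2 / (2 * x) by rewrite divr_ge0 ?sqr_ge0 // ltW // mulr_gt0.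
  have pr : 0 < m1 a * m2 r / (2 * m2 a * m1 r) by rewrite divr_gt0 // ?mulr_gt0.
  rewrite e1 e2; lra.
pose Ms s r := \sum_(t | t != r) m s t.
have Msp : forall s r, 0 < Ms s r.
  move=> s r; have [t /andP [tr _]] := three_distinct N3 r r.
  rewrite /Ms (bigD1 t) //=; apply: ltr_pwDl; first exact: mp.
  by apply: sumr_ge0 => i _; exact: ltW.
pose del s r := (\sum_(t | t != r) m s t * E (~~ s) t - m s r * E s r) / Ms s r.
have delp : forall s r, 0 < del s r.
  by move=> s r; apply: divr_gt0; [rewrite subr_gt0 | exact: Msp].
pose g s r t := del s r - E (~~ s) t.
pose u s r := psol (q s) r (g s r).
have u0 : forall s r, u s r r = 0 by move=> s r; case: (poisson (qpos s) r (g s r)).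
have uL : forall s r t, t != r -> \sum_(j | j != t) q s t j * (u s r j - u s r t) = g s r t.
  by move=> s r; case: (poisson (qpos s) r (g s r)).
have inv0 : forall s (w : 'I_N -> R),
    \sum_j m s j * \sum_(t | t != j) q s j t * (w t - w j) = 0.
  move=> s w.
  have -> : \sum_j m s j * \sum_(t | t != j) q s j t * (w t - w j)
      = \sum_j \sum_(t | t != j) (m s j * q s j t) * w t - \sum_j m s j * al s j * w j.
    rewrite -sumrB; apply: eq_bigr => j _.
    rewrite /al /alph !mulr_sumr mulr_suml -sumrB; apply: eq_bigr => t _; ring.
  rewrite sum_exch; apply/eqP; rewrite subr_eq0; apply/eqP; apply: eq_bigr => t _.
  by rewrite -mulr_suml me.
have uE : forall s r, \sum_(j | j != r) p r j s * u s r j = E s r.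
  move=> s r; have := inv0 s (u s r).
  rewrite (bigD1 r) //= u0.
  have -> : \sum_(j | j != r) m s j * \sum_(t | t != j) q s j t * (u s r t - u s r j)
          = \sum_(j | j != r) m s j * g s r j.
    by apply: eq_bigr => j jr; rewrite uL.
  have -> : \sum_(t | t != r) q s r t * (u s r t - 0) = \sum_(j | j != r) p r j s * u s r j.
    by apply: eq_bigr => t _; rewrite subr0.
  have -> : \sum_(j | j != r) m s j * g s r j = - (m s r * E s r).
    rewrite /g; rewrite (eq_bigr (fun j => m s j * del s r - m s j * E (~~ s) j));
      last by move=> j _; ring.
    rewrite sumrB -mulr_suml -/(Ms s r) /del mulrC -mulrA mulVf ?mulr1;
      last by rewrite lt0r_neq0.
    ring.
  move=> h; apply: (mulfI (lt0r_neq0 (mp s r))); lra.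
have [d1 [d1p d1l]] := fin_lower (fun x : bool * 'I_N => delp x.1 x.2).
have [d2 [d2p d2l]] := fin_lower (fun i : 'I_N => addr_gt0 (Ep true i) (Ep false i)).
exists u, (Num.min d1 d2); split; first by rewrite lt_min d1p d2p.
split => //; split.
  move=> s r t tr; rewrite uE.
  have -> : \sum_(j | j != t) p t j s * (u s r j - u s r t) = g s r t by exact: uL.
  rewrite /g addrC subrK; apply: le_trans (d1l (s, r)); by rewrite ge_min lexx.
move=> i; rewrite !uE; apply: le_trans (d2l i); by rewrite ge_min lexx orbT.
Qed.
End Drift.

Lemma sorted_rcons_inv (T : Type) (e : rel T) s x : sorted e (rcons s x) -> sorted e s.
Proof. by case: s => //= h t; rewrite rcons_path => /andP []. Qed.

Lemma sorted_rcons2 (T : Type) (e : rel T) s x y :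
  sorted e (rcons s x) -> e x y -> sorted e (rcons (rcons s x) y).
Proof.
case: s => [|h t] /=; first by rewrite andbT.
by rewrite !rcons_path last_rcons => -> ->.
Qed.

Section Walk.
Variable N : nat.
Variable p : 'I_N -> 'I_N -> bool -> R.

Lemma mulgen_rcons (i0 : 'I_N) w' i k' j k :
  mulgen (i0, rcons w' (i, k')) j k =
  if k' != k then (i0, rcons (rcons w' (i, k')) (j, k))
  else if last i0 (map fst w') == j then (i0, w') else (i0, rcons w' (j, k)).
Proof. by rewrite /mulgen /= rev_rcons /= revK. Qed.

Lemma target_rcons (i0 : 'I_N) w' i k' : target (i0, rcons w' (i, k')) = i.
Proof. by rewrite /target /= map_rcons last_rcons. Qed.

Lemma step_reduced (x : raw_arrow N) c : reduced x -> c.1 != target x -> reduced (step x c).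
Proof.
case: x => i0 w; case: c => j k /=.
case/lastP: w => [|w' [i k']].
  by rewrite /reduced /step /mulgen /target /= => _; rewrite eq_sym => ->.
rewrite target_rcons /step mulgen_rcons /reduced /= !map_rcons rcons_path.
case/andP => /andP [pw' lastw'] sw ji.
case: (boolP (k' != k)) => kk /=.
  rewrite !map_rcons rcons_path rcons_path pw' lastw' /= last_rcons eq_sym ji /=.
  by apply: sorted_rcons2.
move: kk; rewrite negbK => /eqP <-.
case: (boolP (last i0 [seq i.1 | i <- w'] == j)) => lj /=.
  by rewrite pw' /=; apply: sorted_rcons_inv sw.
rewrite !map_rcons rcons_path pw' /= lj; exact: sw.
Qed.

Lemma first_hit_endpoint (x y : raw_arrow N) cs :
  first_hit_at_end x y cs -> endpoint x cs = y.
Proof.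
elim: cs x => [|c cs IH] x /=; first by move/eqP.
by case/andP => _; apply: IH.
Qed.

Lemma path_prob_ge0 : (forall i j k, i != j -> 0 <= p i j k) ->
  forall x cs, 0 <= path_prob p x cs.
Proof.
move=> p0; move=> x cs; elim: cs x => [|c cs IH] x /=; first exact: ler01.
apply: mulr_ge0 => //; rewrite /step_prob; case: ifP => h; [apply: p0; by rewrite eq_sym h | by []].
Qed.

End Walk.

Lemma sum_bool_split (F : bool -> R) (b : bool) : \sum_k F k = F b + F (~~ b).
Proof. by rewrite big_bool; case: b => //=; rewrite addrC. Qed.

Section Lyap.
Variable N : nat.
Variable p : 'I_N -> 'I_N -> bool -> R.
Hypothesis ppos : forall i j k, i != j -> 0 < p i j k.
Hypothesis psum : forall i : 'I_N, \sum_(j : 'I_N | j != i) \sum_(k : bool) p i j k = 1.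
Variable u : bool -> 'I_N -> 'I_N -> R.
Variable d : R.
Hypothesis u0 : forall s r, u s r r = 0.
Hypothesis udrift : forall s r t, t != r ->
  d <= \sum_(j | j != t) p t j (~~ s) * u (~~ s) t j
     + \sum_(j | j != t) p t j s * (u s r j - u s r t).
Hypothesis uroot : forall i, d <= \sum_(j | j != i) p i j true * u true i j
                + \sum_(j | j != i) p i j false * u false i j.
Variable V : R.
Hypothesis Vb : forall s r t, `|u s r t| <= V.
Variable eps : R.
Hypothesis epsp : 0 < eps.
Hypothesis epsV : eps * V < 1.
Hypothesis epsd : eps * (V * V + d * V / 2) <= d / 2.
Hypothesis dpos : 0 < d.
Hypothesis epsd1 : eps * d <= 1.

Definition phi (r t : 'I_N) (s : bool) := 1 - eps * u s r t.
Fixpoint Fw (prev : 'I_N) (w : seq ('I_N * bool)) : R :=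
  match w with [::] => GRing.one R
  | (t, k) :: w' => GRing.mul (phi prev t k) (Fw t w') end.
Definition fL (x : raw_arrow N) := Fw x.1 x.2.
Definition rho := 1 - eps * d / 2.

Lemma phi_pos r t s : 0 < phi r t s.
Proof.
rewrite /phi subr_gt0; apply: le_lt_trans epsV.
apply: le_trans (ler_norm _) _; rewrite normrM (gtr0_norm epsp).
by apply: ler_wpM2l; [exact: ltW | exact: Vb].
Qed.

Lemma Fw_pos prev w : 0 < Fw prev w.
Proof. by elim: w prev => [|[t k] w IH] prev //=; rewrite mulr_gt0 // phi_pos. Qed.

Lemma Fw_rcons prev w t k :
  Fw prev (rcons w (t, k)) = Fw prev w * phi (last prev (map fst w)) t k.
Proof.
elim: w prev => [|[t' k'] w IH] prev /=; first by rewrite mulr1 mul1r.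
by rewrite IH mulrA.
Qed.

Lemma alpha_split i : \sum_(j | j != i) p i j true + \sum_(j | j != i) p i j false = 1.
Proof. by rewrite -big_split /= -(psum i); apply: eq_bigr => j _; rewrite big_bool. Qed.

Lemma sum_phi (r i : 'I_N) s :
  \sum_(j | j != i) p i j s * phi r j s =
  \sum_(j | j != i) p i j s - eps * \sum_(j | j != i) p i j s * u s r j.
Proof.
rewrite mulr_sumr -sumrB; apply: eq_bigr => j _; rewrite /phi; ring.
Qed.

Lemma sum_abs_le (i : 'I_N) s (w : 'I_N -> R) :
  (forall j, `|w j| <= V) ->
  `|\sum_(j | j != i) p i j s * w j| <= V.
Proof.
move=> wb; apply: le_trans (ler_norm_sum _ _ _) _.
apply: le_trans (_ : \sum_(j | j != i) p i j s * V <= V).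
  apply: ler_sum => j ji.
  have pij : 0 < p i j s by apply: ppos; rewrite eq_sym.
  by rewrite normrM (gtr0_norm pij); apply: ler_wpM2l => //; apply: ltW.
have V0 : 0 <= V by apply: le_trans (Vb true i i); exact: normr_ge0.
rewrite -mulr_suml ler_piMl //.
have := alpha_split i.
have h1 : 0 <= \sum_(j | j != i) p i j true.
  by apply: sumr_ge0 => j ji; apply: ltW; apply: ppos; rewrite eq_sym.
have h2 : 0 <= \sum_(j | j != i) p i j false.
  by apply: sumr_ge0 => j ji; apply: ltW; apply: ppos; rewrite eq_sym.
by case: s; lra.
Qed.


Lemma sum_pair (G : 'I_N * bool -> R) : \sum_c G c = \sum_j \sum_k G (j, k).
Proof. by rewrite pair_bigA; apply: eq_bigr => -[]. Qed.

Lemma phi_rr r s : phi r r s = 1.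
Proof. by rewrite /phi u0 mulr0 subr0. Qed.

Lemma key_ineq (aK aN E S v : R) :
  aK + aN = 1 -> `|E| <= V -> `|v| <= V -> d <= E + S - aK * v ->
  (aK - eps * S) + (1 - eps * v) * (aN - eps * E) <= rho * (1 - eps * v).
Proof.
move=> sa hE hv hD.
have V0 : 0 <= V by apply: le_trans hv; exact: normr_ge0.
have h1 : E * v <= V * V.
  apply: le_trans (ler_norm _) _; rewrite normrM.
  by apply: ler_pM => //; exact: normr_ge0.
have h2 : - (d * v) <= d * V.
  rewrite -mulrN; apply: ler_wpM2l; first exact: ltW.
  by apply: le_trans hv; rewrite -normrN ler_norm.
have h3 : eps * (E * v - d * v / 2) <= eps * (V * V + d * V / 2).
  by apply: ler_wpM2l; [exact: ltW | lra].
have -> : aN = 1 - aK by lra.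
rewrite -subr_ge0.
have -> : rho * (1 - eps * v) - (aK - eps * S + (1 - eps * v) * (1 - aK - eps * E))
   = eps * ((E + S - aK * v - d) + (d / 2 - eps * (E * v - d * v / 2))).
  by rewrite /rho; field.
have h4 := le_trans h3 epsd.
move: h4 hD; set Q := eps * (E * v - d * v / 2); move=> h4 hD.
by apply: mulr_ge0; [exact: ltW | lra].
Qed.

Lemma one_step (x : raw_arrow N) : reduced x ->
  \sum_(c : 'I_N * bool) step_prob p x c * fL (step x c) <= rho * fL x.
Proof.
case: x => i0 w; case/lastP: w => [|w' [i k']] red.
  rewrite sum_pair.
  have -> : \sum_j \sum_k step_prob p (i0, [::]) (j, k) * fL (step (i0, [::]) (j, k))
      = \sum_(j | j != i0) (p i0 j true * phi i0 j true + p i0 j false * phi i0 j false).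
    rewrite [RHS]big_mkcond; apply: eq_bigr => j _.
    rewrite big_bool /step_prob /step /mulgen /fL /target /=.
    by case: ifP => _; rewrite ?mulr1 // !mul0r addr0.
  rewrite big_split /= !sum_phi /fL /= mulr1 /rho.
  have h1 := alpha_split i0.
  have h2 := ler_wpM2l (ltW epsp) (uroot i0).
  have h3 : 0 <= eps * d by apply: mulr_ge0; apply: ltW.
  rewrite mulrDr in h2; lra.
set x := (i0, rcons w' (i, k')).
set r := last i0 (map fst w').
have ri : r != i.
  by move: red; rewrite /reduced /= map_rcons rcons_path => /andP [/andP [_ h] _].
set F0 := Fw i0 w'.
have fx : fL x = F0 * phi r i k' by rewrite /fL /= Fw_rcons.
have F0p : 0 < F0 by exact: Fw_pos.
rewrite sum_pair.
have -> : \sum_j \sum_k step_prob p x (j, k) * fL (step x (j, k))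
    = F0 * (\sum_(j | j != i) p i j k' * phi r j k'
            + phi r i k' * \sum_(j | j != i) p i j (~~ k') * phi i j (~~ k')).
  rewrite mulrDr !mulr_sumr -big_split /= [RHS]big_mkcond; apply: eq_bigr => j _.
  rewrite (sum_bool_split _ k') /step_prob /step target_rcons /=.
  case: ifP => ji; last by rewrite !mul0r addr0.
  have kk : (k' != ~~ k') = true by case: (k') => /=.
  rewrite !mulgen_rcons eqxx kk /= -/r.
  rewrite /fL /= !Fw_rcons map_rcons last_rcons -/r -/F0.
  case: ifP => [/eqP rj | _] /=.
    rewrite -rj phi_rr /F0; ring.
  by rewrite Fw_rcons -/r /F0; ring.
rewrite fx mulrCA; apply: ler_wpM2l; first exact: ltW.
rewrite !sum_phi.
set aK := \sum_(j | j != i) p i j k'.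
set aN := \sum_(j | j != i) p i j (~~ k').
have sa : aK + aN = 1.
  have := alpha_split i; rewrite /aK /aN; case: (k') => /= h; lra.
rewrite /phi.
apply: key_ineq => //; try (by apply: sum_abs_le => j; exact: Vb); try (exact: Vb).
have ir : i != r by rewrite eq_sym.
have := udrift k' ir; rewrite -/aN.
  have -> : \sum_(j | j != i) p i j k' * (u k' r j - u k' r i)
        = \sum_(j | j != i) p i j k' * u k' r j - aK * u k' r i.
    by rewrite /aK mulr_suml -sumrB; apply: eq_bigr => j _; ring.
  lra.
Qed.


Definition Ef n x := \sum_(cs : n.-tuple ('I_N * bool)) path_prob p x cs * fL (endpoint x cs).

Lemma sum_tuple0 (F : seq ('I_N * bool) -> R) : \sum_(cs : 0.-tuple ('I_N * bool)) F cs = F [::].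
Proof.
rewrite (eq_bigr (fun _ => F [::])); last by move=> cs _; rewrite tuple0.
by rewrite sumr_const card_tuple expn0.
Qed.

Lemma Ef_bound n x : reduced x -> Ef n x <= rho ^+ n * fL x.
Proof.
have rho0 : 0 <= rho by have := epsd1; rewrite /rho; lra.
elim: n x => [|n IH] x rx.
  by rewrite /Ef (sum_tuple0 (fun cs => path_prob p x cs * fL (endpoint x cs))) /= expr0 !mul1r.
have -> : Ef n.+1 x = \sum_c step_prob p x c * Ef n (step x c).
  rewrite /Ef (@sum_tuple_cons _ n (fun cs => path_prob p x cs * fL (endpoint x cs))); apply: eq_bigr => c _.
  by rewrite mulr_sumr; apply: eq_bigr => cs _ /=; rewrite mulrA.
apply: le_trans (_ : \sum_c step_prob p x c * (rho ^+ n * fL (step x c)) <= _).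
  apply: ler_sum => c _; rewrite /step_prob; case: ifP => h; last by rewrite !mul0r.
  apply: ler_wpM2l; first by apply: ltW; apply: ppos; rewrite eq_sym h.
  by apply: IH; apply: step_reduced.
rewrite (eq_bigr (fun c => rho ^+ n * (step_prob p x c * fL (step x c)))); last first.
  by move=> c _; rewrite mulrCA.
rewrite -mulr_sumr exprS -mulrA mulrCA; apply: ler_wpM2l; first exact: exprn_ge0.
exact: one_step.
Qed.

Lemma probW_bound n x y : reduced x -> prob_W p x y n <= rho ^+ n * fL x / fL y.
Proof.
move=> rx; have fy := Fw_pos y.1 y.2.
apply: le_trans (_ : Ef n x / fL y <= _); last first.
  by apply: ler_wpM2r; [rewrite invr_ge0 ltW | exact: Ef_bound].
rewrite /prob_W /Ef mulr_suml; apply: ler_sum => cs _.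
have pp : 0 <= path_prob p x cs.
  by apply: path_prob_ge0 => i j k ij; apply: ltW; apply: ppos.
case: eqP => [-> | _].
  by rewrite mulr1 -mulrA mulfV ?mulr1 // gt_eqF.
rewrite mulr0; apply: mulr_ge0; first by apply: mulr_ge0 => //; apply: ltW; exact: Fw_pos.
by rewrite invr_ge0 ltW.
Qed.

Lemma probtau_le n x y : prob_tau p x y n <= prob_W p x y n.
Proof.
rewrite /prob_tau /prob_W; apply: ler_sum => cs _.
have pp : 0 <= path_prob p x cs.
  by apply: path_prob_ge0 => i j k ij; apply: ltW; apply: ppos.
case: (boolP (first_hit_at_end x y cs)) => h.
  by rewrite (first_hit_endpoint h) eqxx.
by rewrite mulr0; apply: mulr_ge0 => //; case: (_ == _).
Qed.

Lemma probtau_ge0 n x y : 0 <= prob_tau p x y n.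
Proof.
apply: sumr_ge0 => cs _; apply: mulr_ge0; last by case: (first_hit_at_end _ _ _).
by apply: path_prob_ge0 => i j k ij; apply: ltW; apply: ppos.
Qed.

End Lyap.

Unset Implicit Arguments.

Theorem proposition5p7 (N : nat) (p : 'I_N -> 'I_N -> bool -> R) :
  (3 <= N)%N ->
  (forall (i j : 'I_N) (k : bool), i != j -> 0 < p i j k < 1) ->
  (forall i : 'I_N, \sum_(j : 'I_N | j != i) \sum_(k : bool) p i j k = 1) ->
  forall x y : raw_arrow N, is_arrow x -> is_arrow y ->
    Rbar.Rbar_lt (Rbar.Finite 1%R) (PSeries.CV_radius (S_coef p x y)) /\
    Rbar.Rbar_lt (Rbar.Finite 1%R) (PSeries.CV_radius (R_coef p x y)).
Proof.
move=> N3 hp hs x y rx ry.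
have ppos : forall i j k, i != j -> 0 < p i j k.
  by move=> i j k ij; case/andP: (hp i j k ij).
have [u [d0 [d0p [u0 [udr uro]]]]] := drift ppos N3.
pose d := Num.min d0 1.
have dp : 0 < d by rewrite lt_min d0p ltr01.
have dd0 : d <= d0 by rewrite ge_min lexx.
have d1 : d <= 1 by rewrite ge_min lexx orbT.
have udr' : forall s r t, t != r -> d <= \sum_(j | j != t) p t j (~~ s) * u (~~ s) t j
     + \sum_(j | j != t) p t j s * (u s r j - u s r t).
  by move=> s r t tr; apply: le_trans dd0 (udr s r t tr).
have uro' : forall i, d <= \sum_(j | j != i) p i j true * u true i j
                + \sum_(j | j != i) p i j false * u false i j.
  by move=> i; apply: le_trans dd0 (uro i).
pose V := \sum_(z : bool * 'I_N * 'I_N) `|u z.1.1 z.1.2 z.2|.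
have Vb : forall s r t, `|u s r t| <= V.
  move=> s r t; rewrite /V (bigD1 (s, r, t)) //= lerDl.
  by apply: sumr_ge0 => z _; exact: normr_ge0.
have V0 : 0 <= V by apply: le_trans (Vb true (Ordinal (leq_trans (isT : (0 < 3)%N) N3)) (Ordinal (leq_trans (isT : (0 < 3)%N) N3))); exact: normr_ge0.
pose K := V * V + V + 1.
have VV : 0 <= V * V by exact: mulr_ge0.
have K1 : 1 <= K by rewrite /K; lra.
have Kp : 0 < K by lra.
pose eps := d / (4 * K).
have eK : eps * K = d / 4 by rewrite /eps; field; rewrite gt_eqF.
have epsp : 0 < eps by rewrite /eps divr_gt0 // mulr_gt0.
have eVK : eps * V <= eps * K by apply: ler_wpM2l; [exact: ltW | rewrite /K; lra].
have epsV : eps * V < 1 by lra.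
have dV : d * V <= V by apply: ler_piMl.
have epsd : eps * (V * V + d * V / 2) <= d / 2.
  have : eps * (V * V + d * V / 2) <= eps * K.
    by apply: ler_wpM2l; [exact: ltW | rewrite /K; lra].
  lra.
have eK1 : eps <= eps * K by rewrite ler_peMr // ltW.
have ed : eps * d <= eps by rewrite ler_piMr // ltW.
have epsd1 : eps * d <= 1 by lra.
have hW := probW_bound ppos hs u0 udr' uro' Vb epsp epsV epsd dp epsd1.
have hT := probtau_le ppos.
have hT0 := probtau_ge0 ppos.
have rho0 : 0 < rho d eps by rewrite /rho; lra.
have rho1 : rho d eps < 1.
  have : 0 < eps * d by exact: mulr_gt0.
  rewrite /rho; lra.
set C := fL u eps x / fL u eps y.
split; apply: (@radius_gt1 _ C (rho d eps)); try (by apply/RltP).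
  move=> n; split; first by apply/RleP; apply: le_trans (hT0 n x y) (hT n x y).
  by apply/RleP; rewrite RpowE RmultE mulrC; apply: le_trans (hW n x y rx) _; rewrite mulrA.
move=> n; split; first by apply/RleP; exact: hT0.
apply/RleP; rewrite RpowE RmultE mulrC; apply: le_trans (hT n x y) _.
by apply: le_trans (hW n x y rx) _; rewrite mulrA.
Qed.
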